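(* Let $S\in\mathbb{R}^{nd\times p}$ be such that every $d\times d$ diagonal block of $SS^{\top}$ equals $I_d$. Then for every matrix $X\in\mathbb{R}^{nd\times nd}$, \[ \|X\circ SS^{\top}\|_{\mathrm{op}}\le\|X\|_{\mathrm{op}}, \] where $\circ$ denotes the Hadamard (entrywise) product. *)

(* Defs.v *)
From HB Require Import structures.
From mathcomp Require Import all_boot all_order all_algebra.
From mathcomp Require Import boolp classical_sets reals.
Set Implicit Arguments. Unset Strict Implicit. Unset Printing Implicit Defensive.
Import Order.TTheory GRing.Theory Num.Theory.
Local Open Scope ring_scope.
Local Open Scope classical_set_scope.

Definition l2norm (R : realType) (n : nat) (v : 'cV[R]_n) : R :=
  Num.sqrt (\sum_(i < n) v i 0 ^+ 2).

Definition opnorm (R : realType) (m n : nat) (A : 'M[R]_(m, n)) : R :=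
  sup [set l2norm (A *m v) | v in [set v : 'cV[R]_n | l2norm v <= 1]].

Definition hadamard (R : realType) (m n : nat) (A B : 'M[R]_(m, n)) : 'M[R]_(m, n) :=
  \matrix_(i, j) (A i j * B i j).

(* Main.v *)
Require Import Defs.
From HB Require Import structures.
From mathcomp Require Import all_boot all_order all_algebra.
From mathcomp Require Import boolp classical_sets reals.
From mathcomp Require Import ring lra.
Import Order.TTheory GRing.Theory Num.Theory.
Local Open Scope ring_scope.

Set Implicit Arguments. Unset Strict Implicit.
Section S.
Variable R : realType.
Local Open Scope classical_set_scope.

Lemma amgm (x y : R) : 2 * x * y <= x ^+ 2 + y ^+ 2.
Proof. rewrite -subr_ge0; have -> : x ^+ 2 + y ^+ 2 - 2 * x * y = (x - y) ^+ 2 by ring.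
exact: sqr_ge0. Qed.

Definition nrm {m} (a : 'I_m -> R) := Num.sqrt (\sum_i a i ^+ 2).

Lemma sumsq_ge0 m (a : 'I_m -> R) : 0 <= \sum_i a i ^+ 2.
Proof. by apply: sumr_ge0 => i _; exact: sqr_ge0. Qed.

Lemma nrm0_eq m (a : 'I_m -> R) : nrm a = 0 -> forall i, a i = 0.
Proof.
move=> /eqP; rewrite /nrm sqrtr_eq0 => H i.
have H0 : \sum_i a i ^+ 2 = 0 by apply/eqP; rewrite eq_le H sumsq_ge0.
have := @psumr_eq0P _ _ predT (fun i => a i ^+ 2) (fun i _ => sqr_ge0 (a i)) H0 i isT.
by move/eqP; rewrite sqrf_eq0 => /eqP.
Qed.

Lemma CS m (a b : 'I_m -> R) : \sum_i a i * b i <= nrm a * nrm b.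
Proof.
have key : 2 * (nrm a * nrm b) * (\sum_i a i * b i) <= 2 * (nrm a * nrm b) ^+ 2.
  have H : \sum_i (2 * (a i * nrm b) * (b i * nrm a)) <=
           \sum_i ((a i * nrm b) ^+ 2 + (b i * nrm a) ^+ 2).
    by apply: ler_sum => i _; exact: amgm.
  have E1 : \sum_i (2 * (a i * nrm b) * (b i * nrm a)) =
            2 * (nrm a * nrm b) * (\sum_i a i * b i).
    rewrite mulr_sumr; apply: eq_bigr => i _; ring.
  have E2 : \sum_i ((a i * nrm b) ^+ 2 + (b i * nrm a) ^+ 2) = 2 * (nrm a * nrm b) ^+ 2.
    rewrite big_split /=.
    under eq_bigr do rewrite exprMn.
    under [X in _ + X]eq_bigr do rewrite exprMn.
    rewrite -!mulr_suml /nrm !sqr_sqrtr ?sumsq_ge0 // exprMn !sqr_sqrtr ?sumsq_ge0 //.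
    ring.
  by rewrite -E1 -E2.
have na : 0 <= nrm a by exact: sqrtr_ge0.
have nb : 0 <= nrm b by exact: sqrtr_ge0.
have [/eqP z|nz] := eqVneq (nrm a * nrm b) 0.
  move: z; rewrite mulf_eq0 => /orP [] /eqP /nrm0_eq z.
    by rewrite (eq_bigr (fun _ => 0)) ?big1 ?mulr_ge0 // => i _; rewrite z mul0r.
  by rewrite (eq_bigr (fun _ => 0)) ?big1 ?mulr_ge0 // => i _; rewrite z mulr0.
have pos : 0 < nrm a * nrm b by rewrite lt_def nz mulr_ge0.
nra.
Qed.

Lemma CSabs m (a b : 'I_m -> R) : `|\sum_i a i * b i| <= nrm a * nrm b.
Proof.
rewrite ler_norml; apply/andP; split; last exact: CS.
rewrite lerNl -sumrN.
have := @CS m (fun i => - a i) b.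
have -> : nrm (fun i => - a i) = nrm a.
  by rewrite /nrm; congr Num.sqrt; apply: eq_bigr => i _; rewrite sqrrN.
by under eq_bigr do rewrite mulNr.
Qed.


Lemma sq_eq (n : nat) (w : 'cV[R]_n) : l2norm w ^+ 2 = \sum_i w i 0 ^+ 2.
Proof. by rewrite /l2norm sqr_sqrtr // sumsq_ge0. Qed.

Lemma l2norm_ge0 n (w : 'cV[R]_n) : 0 <= l2norm w.
Proof. exact: sqrtr_ge0. Qed.

Lemma l2norm0 n : l2norm (0 : 'cV[R]_n) = 0.
Proof. by rewrite /l2norm big1 ?sqrtr0 // => i _; rewrite mxE expr2 mul0r. Qed.

Lemma l2normZ n c (w : 'cV[R]_n) : l2norm (c *: w) = `|c| * l2norm w.
Proof.
rewrite /l2norm.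
have -> : \sum_i (c *: w) i 0 ^+ 2 = c ^+ 2 * \sum_i w i 0 ^+ 2.
  by rewrite mulr_sumr; apply: eq_bigr => i _; rewrite mxE exprMn.
by rewrite sqrtrM ?sqr_ge0 // sqrtr_sqr.
Qed.

Lemma l2norm0_eq n (w : 'cV[R]_n) : l2norm w = 0 -> w = 0.
Proof.
move=> /(@nrm0_eq n (fun i => w i 0)) H; apply/matrixP => i j.
by rewrite ord1 mxE H.
Qed.

Lemma CSl2 n (a b : 'cV[R]_n) : \sum_i a i 0 * b i 0 <= l2norm a * l2norm b.
Proof. exact: (@CS n (fun i => a i 0) (fun i => b i 0)). Qed.

Definition Eset m n (X : 'M[R]_(m, n)) :=
  [set l2norm (X *m v) | v in [set v : 'cV[R]_n | l2norm v <= 1]].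

Lemma Eset_sup m n (X : 'M[R]_(m, n)) : has_sup (Eset X).
Proof.
split.
  exists (l2norm (X *m 0)); exists 0 => //=.
  by rewrite l2norm0 ler01.
exists (Num.sqrt (\sum_i \sum_j X i j ^+ 2)).
move=> _ [v /= hv <-].
rewrite /l2norm ler_sqrt; last by apply: sumr_ge0 => i _; exact: sumsq_ge0.
apply: ler_sum => i _.
have h : `|(X *m v) i 0| <= nrm (fun j => X i j).
  rewrite mxE; apply: (le_trans (CSabs (fun j => X i j) (fun j => v j 0))).
  rewrite -[X in _ <= X]mulr1; apply: ler_wpM2l; first exact: sqrtr_ge0.
  exact: hv.
have r0 : 0 <= nrm (fun j => X i j) by exact: sqrtr_ge0.
have -> : \sum_j X i j ^+ 2 = nrm (fun j => X i j) ^+ 2.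
  by rewrite /nrm sqr_sqrtr // sumsq_ge0.
move: h; rewrite ler_norml => /andP [h1 h2]; nra.
Qed.

Lemma opnorm_ub m n (X : 'M[R]_(m, n)) v : l2norm v <= 1 -> l2norm (X *m v) <= opnorm X.
Proof.
move=> hv; apply: (sup_upper_bound (Eset_sup X)); by exists v.
Qed.

Lemma opnorm_ge0 m n (X : 'M[R]_(m, n)) : 0 <= opnorm X.
Proof.
apply: le_trans (opnorm_ub X (v := 0) _); first by rewrite mulmx0 l2norm0.
by rewrite l2norm0 ler01.
Qed.

Lemma opnorm_scale m n (X : 'M[R]_(m, n)) w : l2norm (X *m w) <= opnorm X * l2norm w.
Proof.
have [z|nz] := eqVneq (l2norm w) 0.
  by rewrite (l2norm0_eq z) mulmx0 !l2norm0 mulr0.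
have p : 0 < l2norm w by rewrite lt_def nz l2norm_ge0.
have h := opnorm_ub X (v := (l2norm w)^-1 *: w) _.
rewrite l2normZ ger0_norm ?invr_ge0 ?l2norm_ge0 // mulVf // in h.
have {h} := h (lexx _).
rewrite -scalemxAr l2normZ ger0_norm ?invr_ge0 ?l2norm_ge0 // => h.
have -> : l2norm (X *m w) = ((l2norm w)^-1 * l2norm (X *m w)) * l2norm w.
  by rewrite mulrC mulrA mulfV // mul1r.
by apply: ler_wpM2r => //; exact: l2norm_ge0.
Qed.

End S.
Unset Implicit Arguments.

Lemma col_sum (R : realType) N p (S : 'M[R]_(N, p)) (hd : forall i, (S *m S^T) i i = 1)
  (w : 'cV[R]_N) :
  \sum_k l2norm (\col_j (w j 0 * S j k)) ^+ 2 = l2norm w ^+ 2.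
Proof.
rewrite sq_eq.
transitivity (\sum_k \sum_i w i 0 ^+ 2 * (S i k * S i k)).
  apply: eq_bigr => k _; rewrite sq_eq; apply: eq_bigr => i _; rewrite mxE; ring.
rewrite exchange_big; apply: eq_bigr => i _; rewrite -mulr_sumr.
have := hd i; rewrite mxE => h.
rewrite (eq_bigr (fun k => S i k * S^T k i)) ?h ?mulr1 // => k _.
by rewrite mxE.
Qed.

Lemma nrm_col (R : realType) N p (S : 'M[R]_(N, p)) (hd : forall i, (S *m S^T) i i = 1)
  (w : 'cV[R]_N) :
  nrm (fun k => l2norm (\col_j (w j 0 * S j k))) = l2norm w.
Proof.
by rewrite /nrm /= col_sum // sqrtr_sqr ger0_norm // l2norm_ge0.
Qed.

Theorem lemma8 (R : realType) (n d p : nat) (S : 'M[R]_(n * d, p))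
  (hS : forall i j : 'I_(n * d), (i %/ d = j %/ d)%N ->
          (S *m S^T) i j = (i == j)%:R) :
  forall X : 'M[R]_(n * d, n * d),
    opnorm (hadamard X (S *m S^T)) <= opnorm X.
Proof.
move=> X.
have hd : forall i, (S *m S^T) i i = 1 by move=> i; rewrite hS // eqxx.
rewrite {1}/opnorm; apply: ge_sup.
  by exists (l2norm (hadamard X (S *m S^T) *m 0)); exists 0 => //=; rewrite l2norm0 ler01.
move=> _ [v /= hv <-].
have ueq : forall i, (hadamard X (S *m S^T) *m v) i 0 =
    \sum_j \sum_k X i j * S i k * S j k * v j 0.
  move=> i; rewrite mxE; apply: eq_bigr => j _; rewrite !mxE mulr_sumr mulr_suml.
  by apply: eq_bigr => k _; rewrite mxE; ring.
move: (hadamard X (S *m S^T) *m v) ueq => u ueq.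
have step1 : l2norm u ^+ 2 = \sum_k \sum_i (\col_i (u i 0 * S i k)) i 0 *
                                     (X *m \col_j (v j 0 * S j k)) i 0.
  rewrite sq_eq exchange_big /=; apply: eq_bigr => i _.
  rewrite expr2 {2}ueq mulr_sumr.
  transitivity (\sum_k \sum_j (u i 0 * S i k) * (X i j * (v j 0 * S j k))).
    rewrite exchange_big /=; apply: eq_bigr => j _; rewrite mulr_sumr.
    by apply: eq_bigr => k _; ring.
  apply: eq_bigr => k _; rewrite !mxE mulr_sumr; apply: eq_bigr => j _; rewrite !mxE.
  done.
have o0 := opnorm_ge0 X.
have step2 : l2norm u ^+ 2 <= opnorm X * (l2norm u * l2norm v).
  rewrite step1.
  apply: (@le_trans _ _ (\sum_k opnorm X * (l2norm (\col_i (u i 0 * S i k)) *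
                                        l2norm (\col_j (v j 0 * S j k))))).
    apply: ler_sum => k _; apply: le_trans (CSl2 _ _) _.
    rewrite mulrCA; apply: ler_wpM2l; [exact: l2norm_ge0 | exact: opnorm_scale].
  rewrite -mulr_sumr; apply: ler_wpM2l => //.
  have := @CS _ _ (fun k => l2norm (\col_i (u i 0 * S i k)))
                  (fun k => l2norm (\col_j (v j 0 * S j k))).
  by rewrite !nrm_col.
have U0 := l2norm_ge0 u.
have [->|nz] := eqVneq (l2norm u) 0; first done.
have pU : 0 < l2norm u by rewrite lt_def nz U0.
have h : l2norm u * l2norm u <= (opnorm X * l2norm v) * l2norm u.
  by rewrite -expr2 -mulrA [l2norm v * _]mulrC.
rewrite ler_pM2r // in h.
apply: le_trans h _.
rewrite -[X in _ <= X]mulr1; apply: ler_wpM2l => //.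
Qed.
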